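(* Let $\mathcal{C}$ be a closed convex set with $\overline\Pi=\mathcal{C}\cap\Pi$ closed and convex, let $S=(x_1,\dots,x_m)$ be i.i.d. from $\mathcal{D}_{\mathcal{X}}$ with empirical distribution $\widehat{\mathcal{D}}_{\mathcal{X}}$, let $\mathcal{F}=\{x\mapsto\mathsf{B}_F(\pi(x)\parallel\pi_0(x)):\pi\in\overline\Pi\}\cup\{x\mapsto\mathsf{B}_F(\pi'(x)\parallel\pi(x)):\pi,\pi'\in\overline\Pi\}$ and $\epsilon_m=\sup_{f\in\mathcal{F}}|\mathbb{E}_{\mathcal{D}_{\mathcal{X}}}[f]-\mathbb{E}_{\widehat{\mathcal{D}}_{\mathcal{X}}}[f]|$. Let $\widehat\pi$ minimize $\mathbb{E}_{\mathcal{D}_{\mathcal{X}}}[\mathsf{B}_F(\pi(x)\parallel\pi_0(x))]$ and $\widehat\pi_S$ minimize $\mathbb{E}_{\widehat{\mathcal{D}}_{\mathcal{X}}}[\mathsf{B}_F(\pi(x)\parallel\pi_0(x))]$ over $\pi\in\overline\Pi$, and assume $\pi^*\in\overline\Pi$. Then, with $\mathbb{E}$ denoting $\mathbb{E}_{x\sim\mathcal{D}_{\mathcal{X}}}$: (1) $\mathbb{E}[\mathsf{B}_F(\widehat\pi(x)\parallel\pi_0(x))]\le\mathbb{E}[\mathsf{B}_F(\widehat\pi_S(x)\parallel\pi_0(x))]\le\mathbb{E}[\mathsf{B}_F(\widehat\pi(x)\parallel\pi_0(x))]+2\epsilon_m$; (2) $\mathrm{Improv}(\widehat\pi_S)\g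e\mathbb{E}[\mathsf{B}_F(\widehat\pi(x)\parallel\pi_0(x))]-\mathbb{E}[\mathsf{B}_F(\pi^*(x)\parallel\widehat\pi(x))]-6\epsilon_m$.
   Context: $\mathcal{X},\mathcal{Y}$ finite; models are maps $\pi\colon\mathcal{X}\to\Delta(\mathcal{Y})$; $\Pi\subseteq\Delta(\mathcal{Y})^{\mathcal{X}}$ closed and convex; $\pi_0$ a baseline model; $\pi^*$ a reference model; $\mathcal{D}_{\mathcal{X}}$ a full-support distribution on $\mathcal{X}$. $F$ is convex and differentiable on the interior of its domain (containing $\Delta(\mathcal{Y})$), $\mathsf{B}_F(p\parallel q)=F(p)-F(q)-\langle\nabla F(q),p-q\rangle$. The improvement of a model $\pi$ is $\mathrm{Improv}(\pi)=\mathbb{E}[\mathsf{B}_F(\pi^*(x)\parallel\pi_0(x))]-\mathbb{E}[\mathsf{B}_F(\pi^*(x)\parallel\pi(x))]$. *)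

(* Defs.v *)
From HB Require Import structures.
From mathcomp Require Import all_boot all_order all_algebra.
From mathcomp Require Import all_classical all_reals all_analysis.
Set Implicit Arguments. Unset Strict Implicit. Unset Printing Implicit Defensive.
Import Order.TTheory GRing.Theory Num.Theory.
Import numFieldNormedType.Exports.
Local Open Scope classical_set_scope.
Local Open Scope ring_scope.

(* Y is represented by 'I_n, X by 'I_k.  A point of R^Y is a row vector
   'rV[R]_n ; a model pi : X -> Delta(Y) is a matrix 'M[R]_(k, n) whose
   x-th row  row x pi  is pi(x). *)

Section Defs.
Variable R : realType.

Definition simplex (n : nat) : set 'rV[R]_n :=
  [set p | (forall j, 0 <= p 0 j) /\ \sum_j p 0 j = 1].

Definition models (k n : nat) : set 'M[R]_(k, n) :=
  [set pi | forall x, simplex (row x pi)].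

Definition convex_set_ {V : lmodType R} (A : set V) :=
  forall a b (t : R), A a -> A b -> 0 <= t <= 1 -> A (t *: a + (1 - t) *: b).

Definition convex_on {V : lmodType R} (D : set V) (F : V -> R) :=
  forall a b (t : R), D a -> D b -> 0 <= t <= 1 ->
    F (t *: a + (1 - t) *: b) <= t * F a + (1 - t) * F b.

Definition grad (n : nat) (F : 'rV[R]_n -> R) (q : 'rV[R]_n) : 'rV[R]_n :=
  \row_j derive F q (delta_mx 0 j).

Definition breg (n : nat) (F : 'rV[R]_n -> R) (p q : 'rV[R]_n) : R :=
  F p - F q - \sum_j (grad F q) 0 j * (p - q) 0 j.

Definition expect (k : nat) (D : 'I_k -> R) (f : 'I_k -> R) : R :=
  \sum_x D x * f x.

Definition emp_expect (k m : nat) (S : 'I_m -> 'I_k) (f : 'I_k -> R) : R :=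
  m%:R^-1 * \sum_i f (S i).

Definition Fclass (k n : nat) (F : 'rV[R]_n -> R) (Pibar : set 'M[R]_(k, n))
    (pi0 : 'M[R]_(k, n)) : set ('I_k -> R) :=
  [set f | (exists2 p, Pibar p & f = (fun x => breg F (row x p) (row x pi0)))
        \/ (exists p p', [/\ Pibar p, Pibar p' &
                 f = (fun x => breg F (row x p') (row x p))])].

Definition eps_m (k n m : nat) (F : 'rV[R]_n -> R) (Pibar : set 'M[R]_(k, n))
    (pi0 : 'M[R]_(k, n)) (D : 'I_k -> R) (S : 'I_m -> 'I_k) : \bar R :=
  ereal_sup [set (`|expect D f - emp_expect S f|)%:E | f in Fclass F Pibar pi0].

Definition obj (k n : nat) (F : 'rV[R]_n -> R) (D : 'I_k -> R)
    (pi pi0 : 'M[R]_(k, n)) : R :=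
  expect D (fun x => breg F (row x pi) (row x pi0)).

Definition improv (k n : nat) (F : 'rV[R]_n -> R) (D : 'I_k -> R)
    (pistar pi0 pi : 'M[R]_(k, n)) : R :=
  expect D (fun x => breg F (row x pistar) (row x pi0))
  - expect D (fun x => breg F (row x pistar) (row x pi)).

End Defs.

(* Main.v *)
Require Import Defs.
From HB Require Import structures.
From mathcomp Require Import all_boot all_order all_algebra.
From mathcomp Require Import all_classical all_reals all_analysis.
From mathcomp Require Import ring lra.
Import Order.TTheory GRing.Theory Num.Theory.
Import numFieldNormedType.Exports.
Local Open Scope classical_set_scope.
Local Open Scope ring_scope.

Lemma derive_grad (R : realType) n (F : 'rV[R]_n -> R) q v :
  differentiable F q -> derive F q v = \sum_j grad F q 0 j * v 0 j.
Proof.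
move=> dF; rewrite deriveE //.
rewrite {1}(row_sum_delta v) linear_sum /=.
apply: eq_bigr => j _; rewrite linearZ /= mxE deriveE //; exact: mulrC.
Qed.

Lemma dir_ge (R : realType) n (F : 'rV[R]_n -> R) q v (c : R) :
  differentiable F q ->
  (forall t : R, 0 < t <= 1 -> c <= t^-1 * (F (q + t *: v) - F q)) ->
  c <= \sum_j grad F q 0 j * v 0 j.
Proof.
move=> dF H; rewrite -derive_grad //.
have dv : derivable F q v by exact: diff_derivable.
have := cvg_dnbhs_at_right dv.
move=> /cvgr_to_ge; apply.
near=> t; rewrite /= [_ *: v + q]addrC; apply: H; apply/andP; split.
  by near: t; exact: nbhs_right_gt.
by near: t; apply: nbhs_right_le; exact: ltr01.
Unshelve. all: by end_near. Qed.

Lemma dir_sum_cvg (R : realType) n (I : finType) (F : 'rV[R]_n -> R)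
  (q v : I -> 'rV[R]_n) :
  (forall i, differentiable F (q i)) ->
  (fun t : R => \sum_i t^-1 * (F (q i + t *: v i) - F (q i))) @ 0^'+ -->
  \sum_i \sum_j grad F (q i) 0 j * v i 0 j.
Proof.
move=> dF.
apply: (@cvg_big R I +%R 0 xpredT add_continuous) => // i _.
rewrite -derive_grad //.
have dv : derivable F (q i) (v i) by exact: diff_derivable.
have := cvg_dnbhs_at_right dv.
apply: cvg_trans; apply: near_eq_cvg; near=> t.
by rewrite /= [_ *: v i + q i]addrC.
Unshelve. all: by end_near. Qed.

Lemma dir_sum_ge (R : realType) n (I : finType) (F : 'rV[R]_n -> R)
  (q v : I -> 'rV[R]_n) (c : R) :
  (forall i, differentiable F (q i)) ->
  (forall t : R, 0 < t <= 1 -> c <= \sum_i t^-1 * (F (q i + t *: v i) - F (q i))) ->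
  c <= \sum_i \sum_j grad F (q i) 0 j * v i 0 j.
Proof.
move=> dF H; have := @dir_sum_cvg _ _ _ _ _ v dF; move/cvgr_to_ge; apply.
near=> t; apply: H; apply/andP; split.
  by near: t; exact: nbhs_right_gt.
by near: t; apply: nbhs_right_le; exact: ltr01.
Unshelve. all: by end_near. Qed.

Lemma dir_sum_le (R : realType) n (I : finType) (F : 'rV[R]_n -> R)
  (q v : I -> 'rV[R]_n) (c : R) :
  (forall i, differentiable F (q i)) ->
  (forall t : R, 0 < t <= 1 -> \sum_i t^-1 * (F (q i + t *: v i) - F (q i)) <= c) ->
  \sum_i \sum_j grad F (q i) 0 j * v i 0 j <= c.
Proof.
move=> dF H; have := @dir_sum_cvg _ _ _ _ _ v dF; move/cvgr_to_le; apply.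
near=> t; apply: H; apply/andP; split.
  by near: t; exact: nbhs_right_gt.
by near: t; apply: nbhs_right_le; exact: ltr01.
Unshelve. all: by end_near. Qed.

Lemma breg_ge0 (R : realType) n (F : 'rV[R]_n -> R) (dom : set 'rV[R]_n)
  (HFc : convex_on dom F)
  (Hsimplex : @simplex R n `<=` interior dom)
  (Hdiff : forall q, interior dom q -> differentiable F q) p q :
  simplex p -> simplex q -> 0 <= breg F p q.
Proof.
move=> sp sq; rewrite /breg subr_ge0.
have := @dir_sum_le R n 'I_1 F (fun=> q) (fun=> p - q) (F p - F q).
rewrite big_ord1; apply; first by move=> _; apply: Hdiff; exact: Hsimplex.
move=> t /andP[t0 t1]; rewrite big_ord1.
have -> : q + t *: (p - q) = t *: p + (1 - t) *: q.
  by rewrite scalerBr scalerBl scale1r addrCA addrA.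
have := HFc p q t (interior_subset (Hsimplex _ sp)) (interior_subset (Hsimplex _ sq)).
rewrite (ltW t0) t1 => /(_ isT) Hc.
rewrite ler_pdivrMl //.
have : F (t *: p + (1 - t) *: q) - F q <= t * F p + (1 - t) * F q - F q by rewrite lerD2r.
move/le_trans; apply; rewrite le_eqVlt; apply/orP; left; apply/eqP; ring.
Qed.

Lemma breg_shift (R : realType) n (F : 'rV[R]_n -> R) b v c (t : R) :
  breg F (b + t *: v) c - breg F b c =
  F (b + t *: v) - F b - t * \sum_j grad F c 0 j * v 0 j.
Proof.
rewrite /breg.
have -> : \sum_j grad F c 0 j * (b + t *: v - c) 0 j =
    \sum_j grad F c 0 j * (b - c) 0 j + t * \sum_j grad F c 0 j * v 0 j.
  rewrite mulr_sumr -big_split; apply: eq_bigr => j _; rewrite !mxE /=; ring.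
ring.
Qed.

Lemma breg_three (R : realType) n (F : 'rV[R]_n -> R) a b c :
  breg F a c - breg F a b - breg F b c =
  \sum_j grad F b 0 j * (a - b) 0 j - \sum_j grad F c 0 j * (a - b) 0 j.
Proof.
rewrite /breg.
have -> : \sum_j grad F c 0 j * (a - c) 0 j =
    \sum_j grad F c 0 j * (a - b) 0 j + \sum_j grad F c 0 j * (b - c) 0 j.
  rewrite -big_split; apply: eq_bigr => j _; rewrite !mxE /=; ring.
ring.
Qed.

Lemma pyth_sum (R : realType) n (F : 'rV[R]_n -> R) (I : finType)
  (a b c : I -> 'rV[R]_n) :
  (forall i, differentiable F (b i)) ->
  (forall t : R, 0 < t <= 1 -> \sum_i breg F (b i) (c i) <=
      \sum_i breg F (b i + t *: (a i - b i)) (c i)) ->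
  \sum_i breg F (a i) (b i) + \sum_i breg F (b i) (c i) <=
  \sum_i breg F (a i) (c i).
Proof.
move=> dF H.
rewrite -subr_ge0 opprD addrA -!sumrB.
under eq_bigr do rewrite breg_three.
rewrite sumrB subr_ge0.
apply: dir_sum_ge => // t /andP[t0 t1].
have := H t; rewrite t0 t1 => /(_ isT); rewrite -subr_ge0 -sumrB.
under eq_bigr do rewrite breg_shift.
move=> Hs.
rewrite -(ler_pM2l t0) mulr_sumr -subr_ge0 mulr_sumr -sumrB.
apply: (le_trans Hs); rewrite le_eqVlt; apply/orP; left; apply/eqP.
apply: eq_bigr => i _; rewrite mulrA mulfV ?gt_eqF // mul1r; ring.
Qed.
Theorem lemma5 (R : realType) (k n m : nat)
  (* F : convex, differentiable on the interior of its domain dom, which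
     contains Delta(Y) *)
  (F : 'rV[R]_n -> R) (dom : set 'rV[R]_n)
  (Hdomc : convex_set_ dom) (HFc : convex_on dom F)
  (Hsimplex : @simplex R n `<=` interior dom)
  (Hdiff : forall q, interior dom q -> differentiable F q)
  (* the model class Pi and the closed convex set C *)
  (Pi C : set 'M[R]_(k, n))
  (HPi : Pi `<=` @models R k n) (HPicl : closed Pi) (HPicv : convex_set_ Pi)
  (HCcl : closed C) (HCcv : convex_set_ C)
  (HPibcl : closed (C `&` Pi)) (HPibcv : convex_set_ (C `&` Pi))
  (* baseline and reference models *)
  (pi0 pistar : 'M[R]_(k, n)) (Hpi0 : @models R k n pi0)
  (Hpistar : (C `&` Pi) pistar)
  (* full-support distribution on X *)
  (D : 'I_k -> R) (HD : forall x, 0 < D x) (HD1 : \sum_x D x = 1)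
  (* sample S = (x_1, ..., x_m) *)
  (Hm : (0 < m)%N) (S : 'I_m -> 'I_k)
  (* population and empirical minimisers over Pibar = C ∩ Pi *)
  (pihat pihatS : 'M[R]_(k, n))
  (Hpihat : (C `&` Pi) pihat)
  (Hpihat_min : forall p, (C `&` Pi) p -> obj F D pihat pi0 <= obj F D p pi0)
  (HpihatS : (C `&` Pi) pihatS)
  (HpihatS_min : forall p, (C `&` Pi) p ->
     emp_expect S (fun x => breg F (row x pihatS) (row x pi0))
     <= emp_expect S (fun x => breg F (row x p) (row x pi0))) :
  let eps := eps_m F (C `&` Pi) pi0 D S in
  [/\ obj F D pihat pi0 <= obj F D pihatS pi0,
      ((obj F D pihatS pi0)%:E <= (obj F D pihat pi0)%:E + 2%:E * eps)%E
    & ((improv F D pistar pi0 pihatS)%:E >=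
        (obj F D pihat pi0
         - expect D (fun x => breg F (row x pistar) (row x pihat)))%:E
        - 6%:E * eps)%E].
Proof.
move=> eps.
set Pb := C `&` Pi.
have rows : forall p, Pb p -> forall x, simplex (row x p).
  by move=> p [_ /HPi Hp] x; exact: Hp.
have ub1 : forall p, Pb p ->
  ((`|obj F D p pi0 - emp_expect S (fun x => breg F (row x p) (row x pi0))|)%:E <= eps)%E.
  move=> p Pp; apply: ereal_sup_ubound.
  exists (fun x => breg F (row x p) (row x pi0)) => //.
  by left; exists p.
have ub2 : forall p p', Pb p -> Pb p' ->
  ((`|expect D (fun x => breg F (row x p') (row x p))
      - emp_expect S (fun x => breg F (row x p') (row x p))|)%:E <= eps)%E.
  move=> p p' Pp Pp'; apply: ereal_sup_ubound.
  exists (fun x => breg F (row x p') (row x p)) => //.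
  by right; exists p, p'.
have eps0 : (0 <= eps)%E.
  by apply: le_trans (ub1 _ Hpihat); rewrite lee_fin.
have part1 : obj F D pihat pi0 <= obj F D pihatS pi0 by exact: Hpihat_min.
have [[e He]|Hinf] : (exists e, eps = e%:E) \/ eps = +oo%E.
  have gen : forall x : \bar R, (0 <= x)%E -> (exists e, x = e%:E) \/ x = +oo%E.
    by case => [e _||] //; [left; exists e|right].
  exact: gen eps0.
2: { rewrite Hinf; split => //.
  - have -> : (2%:E * +oo = +oo :> \bar R)%E.
      by rewrite muleC gt0_mulye // lte_fin ltr0n.
    by rewrite addey // leey.
  - have -> : (6%:E * +oo = +oo :> \bar R)%E.
      by rewrite muleC gt0_mulye // lte_fin ltr0n.
    by rewrite addeNy leNye. }
rewrite He; rewrite He in ub1 ub2.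
have e0 : 0 <= e by rewrite -lee_fin -He.
have absP : forall x y : R, ((`|x - y|)%:E <= e%:E)%E -> x - y <= e /\ y - x <= e.
  move=> x y; rewrite lee_fin => /ler_normlP [h1 h2]; split => //; lra.
have mpos : 0 < (m%:R : R)^-1 by rewrite invr_gt0 ltr0n.
have pyth : emp_expect S (fun x => breg F (row x pistar) (row x pihatS))
    + emp_expect S (fun x => breg F (row x pihatS) (row x pi0))
    <= emp_expect S (fun x => breg F (row x pistar) (row x pi0)).
  rewrite /emp_expect -mulrDr ler_pM2l //.
  apply: (@pyth_sum R n F 'I_m (fun i => row (S i) pistar)
     (fun i => row (S i) pihatS) (fun i => row (S i) pi0)).
    by move=> i; apply: Hdiff; apply: Hsimplex; exact: rows.
  move=> t /andP[t0 t1].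
  have Pt : Pb (t *: pistar + (1 - t) *: pihatS).
    by apply: HPibcv => //; rewrite (ltW t0) t1.
  have := HpihatS_min _ Pt; rewrite /emp_expect ler_pM2l //.
  move/le_trans; apply; rewrite le_eqVlt; apply/orP; left; apply/eqP.
  apply: eq_bigr => i _; congr breg.
  by apply/rowP => j; rewrite !mxE; ring.
have nnh : 0 <= expect D (fun x => breg F (row x pistar) (row x pihat)).
  apply: sumr_ge0 => x _; apply: mulr_ge0; first exact: ltW.
  apply: (@breg_ge0 R n F dom HFc Hsimplex Hdiff); exact: rows.
have [a1 a2] := absP _ _ (ub1 _ HpihatS).
have [b1 b2] := absP _ _ (ub1 _ Hpihat).
have [c1 c2] := absP _ _ (ub2 _ _ HpihatS Hpistar).
have [d1 d2] := absP _ _ (ub1 _ Hpistar).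
have hmin := HpihatS_min _ Hpihat.
move: a1 a2 b1 b2 c1 c2 d1 d2 hmin pyth nnh part1.
rewrite /obj /improv.
set A := expect _ _; set B := expect _ _; set Cc := expect _ _; set Dd := expect _ _.
set A' := emp_expect _ _; set B' := emp_expect _ _; set C' := emp_expect _ _; set D' := emp_expect _ _.
move=> a1 a2 b1 b2 c1 c2 d1 d2 hmin pyth nnh part1.
split => //.
- rewrite -EFinM -EFinD lee_fin; lra.
- rewrite -EFinM -EFinB lee_fin; lra.
Qed.
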